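(* Let $(I,\leq)$ and $(J,\preccurlyeq)$ be finite posets and $\mathcal P\colon J^{\mathrm{op}}\to\mathrm{Fun}(I,\mathrm{vect}_K)$ a thin functor, and let $\mathcal P$ also denote the collection $\{\mathcal P(a)\mid a\in J,\ \mathcal P(a)\neq 0\}$. Then (1) every functor in $\mathrm{Fun}(I,\mathrm{vect}_K)$ admits a minimal $\mathcal P$-resolution; (2) the collection $\mathcal P$ is acyclic.
   Context: $K$ is a field, $\mathrm{vect}_K$ finite-dimensional $K$-vector spaces, $\mathrm{Fun}(I,\mathrm{vect}_K)$ the abelian category of functors $I\to\mathrm{vect}_K$ with natural transformations (hom sets $\mathrm{Nat}_I$). For $a\in J$, $K(a,-)\colon J\to\mathrm{vect}_K$ is the free functor ($K(a,b)=K$ if $a\preccurlyeq b$, else $0$, identity transitions between nonzero values). $\mathcal R M=\mathrm{Nat}_I(\mathcal P(-),M)$ defines $\mathcal R\colon\mathrm{Fun}(I,\mathrm{vect}_K)\to\mathrm{Fun}(J,\mathrm{vect}_K)$ with left adjoint $\mathcal L$ (given by $\mathcal LF=\mathrm{colim}\big(\bigoplus_{a_0\prec a_1}\mathcal P(a_1)\otimes F(a_0)\rightrightarrows\bigoplus_a\mathcal P(a)\otimes F(a)\big)$); $\eta_a\colon K(a,-)\to\mathcal R\mathcal LK(a,-)$ is the unit; $\mathcal P$ is thin if each $\eta_a$ is pointwise surjective. Relative notions for the collection $\mathcal P$: two composable morphisms $f\colon X\to Y$, $g\colon Y\to Z$ form a $\mathcal P$-exact sequence if $\hom(A,X)\to\hom(A,Y)\to\hom(A,Z)$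 is exact for all $A\in\mathcal P$; $f$ is a $\mathcal P$-epimorphism if $\hom(A,f)$ is surjective for all $A\in\mathcal P$; $C$ is $\mathcal P$-projective if $\hom(C,f)$ is surjective for every $\mathcal P$-epimorphism $f$; $C$ is $\mathcal P$-free if it is isomorphic to a finite direct sum of elements of $\mathcal P$; $\mathcal P$ is acyclic if every $\mathcal P$-projective object is $\mathcal P$-free. A $\mathcal P$-cover of $M$ is a $\mathcal P$-epimorphism $C_0\to M$ with $C_0$ $\mathcal P$-projective, minimal if all its endomorphisms over $M$ are isomorphisms. A $\mathcal P$-resolution of $M$ is a $\mathcal P$-exact sequence $\cdots\to C_1\to C_0\to M\to0$ with every $C_d$ $\mathcal P$-projective; it is minimal if every endomorphism of it (a family $f_d\colon C_d\to C_d$ commuting with all maps and with the augmentation to $M$) is an isomorphism, equivalently each $C_d\to\ker(C_{d-1}\to C_{d-2})$ ($C_{-1}=M$, $C_{-2}=0$) is a minimal $\mathcal P$-cover. *)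

(* Defs.v *)
(* Representations of finite posets by matrices, row-vector
   convention: a linear map V -> W between K^m and K^n is an m x n matrix M,
   acting by v |-> v *m M; composition "f then g" is f *m g. *)
From HB Require Import structures.
From mathcomp Require Import all_boot all_order all_algebra.
Set Implicit Arguments. Unset Strict Implicit. Unset Printing Implicit Defensive.
Import Order.TTheory GRing.Theory.
Local Open Scope ring_scope.

Section PosetReps.
Variable K : fieldType.

Section FunI.
Variables (dI : Order.disp_t) (I : finPOrderType dI).

(* A functor F : I -> vect_K: F(i) = K^(vdim F i), and for i <= j the
   transition map F(i <= j) = vtr F i j (values for i not <= j are
   irrelevant and never used). *)
Record vfun := VFun {
  vdim : I -> nat;
  vtr : forall i j : I, 'M[K]_(vdim i, vdim j);
  vtr_id : forall i, vtr i i = 1%:M;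
  vtr_comp : forall i j k, (i <= j)%O -> (j <= k)%O ->
     vtr i k = vtr i j *m vtr j k
}.

Definition ntr (F G : vfun) := forall i : I, 'M[K]_(vdim F i, vdim G i).

Definition is_nat (F G : vfun) (a : ntr F G) : Prop :=
  forall i j : I, (i <= j)%O -> vtr F i j *m a j = a i *m vtr G i j.

Definition ncomp (F G H : vfun) (a : ntr F G) (b : ntr G H) : ntr F H :=
  fun i => a i *m b i.
Definition nid (F : vfun) : ntr F F := fun i => 1%:M.
Definition nzero (F G : vfun) : ntr F G := fun i => 0.

Definition is_iso (F G : vfun) (a : ntr F G) : Prop :=
  is_nat a /\ exists b : ntr G F, is_nat b /\
    (forall i, (ncomp a b) i = nid F i) /\ (forall i, (ncomp b a) i = nid G i).

Definition vnonzero (F : vfun) : Prop := exists i, vdim F i <> 0%N.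

Lemma vfun0_id (i : I) : (0 : 'M[K]_(0, 0)) = 1%:M.
Proof. by rewrite flatmx0. Qed.
Lemma vfun0_comp (i j k : I) : (i <= j)%O -> (j <= k)%O ->
  (0 : 'M[K]_(0, 0)) = (0 : 'M[K]_(0, 0)) *m (0 : 'M[K]_(0, 0)).
Proof. by rewrite mul0mx. Qed.
Definition vfun0 : vfun := @VFun (fun _ => 0%N) (fun _ _ => (0 : 'M[K]_(0, 0))) vfun0_id vfun0_comp.

End FunI.

Section PFun.
Variables (dI : Order.disp_t) (I : finPOrderType dI)
          (dJ : Order.disp_t) (J : finPOrderType dJ).

Record pfun := PFun {
  pobj : J -> vfun I;
  pmor : forall a b : J, ntr (pobj b) (pobj a);
  pmor_nat : forall a b, (a <= b)%O -> is_nat (pmor a b);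
  pmor_id : forall a i, pmor a a i = 1%:M;
  pmor_comp : forall a b c, (a <= b)%O -> (b <= c)%O ->
     forall i, pmor a c i = pmor b c i *m pmor a b i
}.

Variable P : pfun.

(* Using L K(a,-) = P(a) (by the colimit formula for L), the unit
   eta_a at b is the map K(a,b) -> Nat_I(P(b), P(a)) sending 1 to P(a <= b)
   when a <= b (and the zero map from 0 otherwise).  Pointwise surjectivity
   of eta_a thus says: *)
Definition thin : Prop :=
  forall (a b : J) (al : ntr (pobj P b) (pobj P a)), is_nat al ->
    if (a <= b)%O then exists c : K, forall i, al i = c *: pmor P a b i
    else forall i, al i = 0.

Definition inP (a : J) : Prop := vnonzero (pobj P a).

Definition Pexact (X Y Z : vfun I) (f : ntr X Y) (g : ntr Y Z) : Prop :=
  forall a, inP a ->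
    (forall be : ntr (pobj P a) X, is_nat be ->
        forall i, ncomp (ncomp be f) g i = 0) /\
    (forall al : ntr (pobj P a) Y, is_nat al ->
        (forall i, ncomp al g i = 0) ->
        exists be : ntr (pobj P a) X, is_nat be /\ forall i, ncomp be f i = al i).

Definition Pepi (X Y : vfun I) (f : ntr X Y) : Prop :=
  forall a, inP a ->
    forall al : ntr (pobj P a) Y, is_nat al ->
      exists be : ntr (pobj P a) X, is_nat be /\ forall i, ncomp be f i = al i.

Definition Pprojective (C : vfun I) : Prop :=
  forall (X Y : vfun I) (f : ntr X Y), is_nat f -> Pepi f ->
    forall al : ntr C Y, is_nat al ->
      exists be : ntr C X, is_nat be /\ forall i, ncomp be f i = al i.

(* P-free: isomorphic to a finite direct sum of elements of P, expressed
   via the biproduct (direct sum) data: injections iota_k, projections pi_k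
   with pi_k iota_l = delta_kl and sum_k iota_k pi_k = id. *)
Definition Pfree (C : vfun I) : Prop :=
  exists (n : nat) (t : 'I_n -> J),
    (forall k, inP (t k)) /\
    exists (io : forall k, ntr (pobj P (t k)) C)
           (pr : forall k, ntr C (pobj P (t k))),
      (forall k, is_nat (io k)) /\ (forall k, is_nat (pr k)) /\
      (forall k i, io k i *m pr k i = 1%:M) /\
      (forall k l i, k != l -> io l i *m pr k i = 0) /\
      (forall i, \sum_(k < n) pr k i *m io k i = 1%:M).

Definition acyclic : Prop := forall C : vfun I, Pprojective C -> Pfree C.

(* Chain complexes  ... -> C_2 -> C_1 -> C_0 -> M -> 0 *)
Record presol (M : vfun I) := PResol {
  rC : nat -> vfun I;
  rd : forall d : nat, ntr (rC d.+1) (rC d);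
  reps : ntr (rC 0) M
}.

Definition is_Presolution (M : vfun I) (R : presol M) : Prop :=
  (forall d, is_nat (rd R d)) /\ is_nat (reps R) /\
  (forall d, Pprojective (rC R d)) /\
  Pexact (reps R) (nzero M (vfun0 I)) /\
  Pexact (rd R 0) (reps R) /\
  (forall d, Pexact (rd R d.+1) (rd R d)).

Definition is_Pres_endo (M : vfun I) (R : presol M)
  (f : forall d, ntr (rC R d) (rC R d)) : Prop :=
  (forall d, is_nat (f d)) /\
  (forall d i, ncomp (f d.+1) (rd R d) i = ncomp (rd R d) (f d) i) /\
  (forall i, ncomp (f 0%N) (reps R) i = reps R i).

Definition is_min_Presolution (M : vfun I) (R : presol M) : Prop :=
  is_Presolution R /\
  forall f : forall d, ntr (rC R d) (rC R d), is_Pres_endo f ->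
    forall d, is_iso (f d).

End PFun.
End PosetReps.

(* Main.v *)
Require Import Defs.
From HB Require Import structures.
From mathcomp Require Import all_boot all_order all_algebra.
From Stdlib Require Import Classical ClassicalEpsilon.
From mathcomp Require Import zify.
Set Implicit Arguments. Unset Strict Implicit. Unset Printing Implicit Defensive.
Import Order.TTheory GRing.Theory.
Local Open Scope ring_scope.

Section Basic.
Variable K : fieldType.
Variables (dI : Order.disp_t) (I : finPOrderType dI).
Local Notation vf := (vfun K I).

Lemma is_nat_comp (F G H : vf) (a : ntr F G) (b : ntr G H) :
  is_nat a -> is_nat b -> is_nat (ncomp a b).
Proof. by move=> na nb i j lij; rewrite /ncomp mulmxA na // -mulmxA nb // mulmxA. Qed.

Lemma is_nat_compf (F G H : vf) (a : ntr F G) (b : ntr G H) :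
  is_nat a -> is_nat b -> is_nat (fun i => a i *m b i).
Proof. exact: is_nat_comp. Qed.

Lemma is_nat_add (F G : vf) (a b : ntr F G) :
  is_nat a -> is_nat b -> is_nat (fun i => a i + b i).
Proof. by move=> na nb i j lij; rewrite mulmxDr mulmxDl na // nb. Qed.

Lemma is_nat_opp (F G : vf) (a : ntr F G) :
  is_nat a -> is_nat (fun i => - a i).
Proof. by move=> na i j lij; rewrite mulmxN mulNmx na. Qed.

Lemma is_nat_sub (F G : vf) (a b : ntr F G) :
  is_nat a -> is_nat b -> is_nat (fun i => a i - b i).
Proof. by move=> na nb; apply: is_nat_add => //; apply: is_nat_opp. Qed.

Lemma is_nat_scale (F G : vf) c (a : ntr F G) :
  is_nat a -> is_nat (fun i => c *: a i).
Proof. by move=> na i j lij; rewrite -scalemxAr na // scalemxAl. Qed.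

Lemma is_nat_sum (F G : vf) (T : Type) (r : seq T) (Q : pred T) (a : T -> ntr F G) :
  (forall k, Q k -> is_nat (a k)) -> is_nat (fun i => \sum_(k <- r | Q k) a k i).
Proof.
move=> na i j lij; rewrite mulmx_sumr mulmx_suml; apply: eq_bigr => k Qk.
exact: na.
Qed.

Lemma is_nat_id (F : vf) : is_nat (nid F).
Proof. by move=> i j _; rewrite /nid mulmx1 mul1mx. Qed.

Lemma is_nat_id' (F : vf) : is_nat (fun i => (1%:M : 'M_(vdim F i))).
Proof. exact: is_nat_id. Qed.

Lemma is_nat_zero (F G : vf) : is_nat (fun i => (0 : 'M[K]_(vdim F i, vdim G i))).
Proof. by move=> i j _; rewrite mulmx0 mul0mx. Qed.

Lemma is_nat_inv (F : vf) (a : ntr F F) :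
  is_nat a -> (forall i, a i \in unitmx) -> is_nat (fun i => invmx (a i)).
Proof.
move=> na ua i j lij.
rewrite {1}(_ : vtr F i j = invmx (a i) *m (a i *m vtr F i j)); last first.
  by rewrite mulmxA mulVmx // mul1mx.
by rewrite -na // !mulmxA -(mulmxA _ (a j)) mulmxV // mulmx1.
Qed.

Lemma unit_iso (F : vf) (a : ntr F F) :
  is_nat a -> (forall i, a i \in unitmx) -> is_iso a.
Proof.
move=> na ua; split=> //; exists (fun i => invmx (a i)); split.
  exact: is_nat_inv.
by split=> i; rewrite /ncomp /nid ?mulmxV ?mulVmx.
Qed.

End Basic.


Section Kernel.
Variable K : fieldType.
Variables (dI : Order.disp_t) (I : finPOrderType dI).
Local Notation vf := (vfun K I).
Variables (C X : vf) (p : ntr C X).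
Hypothesis np : is_nat p.

Definition kb i := row_base (kermx (p i)).
Definition ktr i j := kb i *m vtr C i j *m pinvmx (kb j).

Lemma kb_free i : row_free (kb i).
Proof. exact: row_base_free. Qed.

Lemma kb_univ i m (v : 'M_(m, vdim C i)) : v *m p i = 0 -> (v <= kb i)%MS.
Proof. by move=> h; rewrite eq_row_base sub_kermx h. Qed.

Lemma kbp i : kb i *m p i = 0.
Proof. by apply/eqP; rewrite -sub_kermx eq_row_base submx_refl. Qed.

Lemma ktrE i j : (i <= j)%O -> ktr i j *m kb j = kb i *m vtr C i j.
Proof.
move=> lij; apply: mulmxKpV; apply: kb_univ.
by rewrite -mulmxA np // mulmxA kbp mul0mx.
Qed.

Lemma ktr_id i : ktr i i = 1%:M.
Proof. by apply: (row_free_inj (kb_free i)); rewrite ktrE // vtr_id mulmx1 mul1mx. Qed.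

Lemma ktr_comp i j k : (i <= j)%O -> (j <= k)%O -> ktr i k = ktr i j *m ktr j k.
Proof.
move=> lij ljk; apply: (row_free_inj (kb_free k)).
rewrite ktrE ?(le_trans lij ljk) // -mulmxA ktrE // mulmxA ktrE //.
by rewrite -mulmxA -vtr_comp.
Qed.

Definition kerf : vf := VFun ktr_id ktr_comp.
Definition kinc : ntr kerf C := kb.

Lemma kinc_nat : is_nat kinc.
Proof. by move=> i j lij; rewrite /kinc /= ktrE. Qed.

Lemma kinc_p i : kinc i *m p i = 0.
Proof. exact: kbp. Qed.

Lemma kinc_inj i m (u v : 'M_(m, vdim kerf i)) : u *m kinc i = v *m kinc i -> u = v.
Proof. exact: (row_free_inj (kb_free i)). Qed.

Lemma kinc_fact (F : vf) (al : ntr F C) : is_nat al -> (forall i, al i *m p i = 0) ->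
  exists be : ntr F kerf, is_nat be /\ forall i, be i *m kinc i = al i.
Proof.
move=> nal hal; exists (fun i => al i *m pinvmx (kb i)).
have E i : al i *m pinvmx (kb i) *m kinc i = al i by apply: mulmxKpV; apply: kb_univ.
split=> // i j lij; apply: kinc_inj; rewrite -mulmxA E nal //.
by rewrite -mulmxA kinc_nat // mulmxA E.
Qed.

End Kernel.


Section Sums.
Variable K : fieldType.
Variables (dI : Order.disp_t) (I : finPOrderType dI).
Local Notation vf := (vfun K I).

Definition isSum (C : vf) n (Fs : 'I_n -> vf)
  (io : forall k, ntr (Fs k) C) (pr : forall k, ntr C (Fs k)) : Prop :=
      (forall k, is_nat (io k)) /\ (forall k, is_nat (pr k)) /\
      (forall k i, io k i *m pr k i = 1%:M) /\
      (forall k l i, k != l -> io l i *m pr k i = 0) /\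
      (forall i, \sum_(k < n) pr k i *m io k i = 1%:M).

Section BSum.
Variables (A C : vf).
Definition btr i j : 'M[K]_(vdim A i + vdim C i, vdim A j + vdim C j) :=
  block_mx (vtr A i j) 0 0 (vtr C i j).
Lemma btr_id i : btr i i = 1%:M.
Proof. by rewrite /btr !vtr_id -scalar_mx_block. Qed.
Lemma btr_comp i j k : (i <= j)%O -> (j <= k)%O -> btr i k = btr i j *m btr j k.
Proof.
move=> lij ljk; rewrite /btr mulmx_block !mulmx0 !mul0mx !addr0 !add0r.
by rewrite -!vtr_comp.
Qed.
Definition bsum : vf := VFun btr_id btr_comp.
End BSum.

Lemma sum_exists n (Fs : 'I_n -> vf) : exists C io pr, @isSum C n Fs io pr.
Proof.
elim: n Fs => [|n IH] Fs.
  exists (@vfun0 K dI I), (fun k i => 0), (fun k i => 0).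
  split; first by case.
  split; first by case.
  split; first by case.
  split; first by case.
  by move=> i; apply/matrixP => -[].
have [C' [io' [pr' [nio' [npr' [e1 [e2 e3]]]]]]] := IH (fun m => Fs (lift ord0 m)).
pose A := Fs ord0.
pose B := bsum A C'.
pose io (k : 'I_n.+1) : ntr (Fs k) B := fun i =>
  match unlift ord0 k with
  | Some m => pid_mx (vdim (Fs k) i) *m (io' m i *m row_mx 0 1%:M)
  | None => row_mx (pid_mx (vdim (Fs k) i)) 0 end.
pose pr (k : 'I_n.+1) : ntr B (Fs k) := fun i =>
  match unlift ord0 k with
  | Some m => col_mx 0 1%:M *m pr' m i *m pid_mx (vdim (Fs k) i)
  | None => col_mx (pid_mx (vdim (Fs k) i)) 0 end.
have io0 i : io ord0 i = row_mx 1%:M 0 by rewrite /io unlift_none pid_mx_1.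
have pr0 i : pr ord0 i = col_mx 1%:M 0 by rewrite /pr unlift_none pid_mx_1.
have ioS m i : io (lift ord0 m) i = io' m i *m row_mx 0 1%:M.
  by rewrite /io liftK pid_mx_1 mul1mx.
have prS m i : pr (lift ord0 m) i = col_mx 0 1%:M *m pr' m i.
  by rewrite /pr liftK pid_mx_1 mulmx1.
exists B, io, pr; split.
  move=> k i j lij; case: (unliftP ord0 k) => [m ->|->].
    rewrite !ioS mulmxA nio' // -!mulmxA; congr (_ *m _).
    by rewrite /= /btr mul_row_block mul_mx_row !mulmx0 !mul0mx ?add0r ?addr0 mul1mx mulmx1.
  rewrite !io0 /= /btr mul_row_block !mulmx0 !mul0mx !addr0 mul1mx.
  by rewrite mul_mx_row mulmx1 mulmx0.
split.
  move=> k i j lij; case: (unliftP ord0 k) => [m ->|->].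
    have hb : vtr B i j *m col_mx 0 1%:M = col_mx 0 1%:M *m vtr C' i j.
      by rewrite /= /btr mul_block_col mul_col_mx !mulmx0 !mul0mx ?add0r ?addr0 mulmx1 mul1mx.
    by rewrite !prS mulmxA hb -mulmxA npr' // mulmxA.
  by rewrite !pr0 /= /btr mul_block_col mul_col_mx !mulmx0 !mul0mx ?add0r ?addr0 mulmx1 mul1mx.
split.
  move=> k i; case: (unliftP ord0 k) => [m ->|->].
    by rewrite ioS prS mulmxA -(mulmxA (io' m i)) mul_row_col mul0mx add0r mul1mx mulmx1 e1.
  by rewrite io0 pr0 mul_row_col mul0mx addr0 mul1mx.
split.
  move=> k l i; case: (unliftP ord0 k) => [m ->|->];
    case: (unliftP ord0 l) => [m' ->|->] //; rewrite ?eqxx // => hne.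
  - rewrite ioS prS mulmxA -(mulmxA (io' m' i)) mul_row_col mul0mx add0r mul1mx mulmx1.
    by apply: e2; apply: contraNneq hne => ->.
  - by rewrite io0 prS mulmxA mul_row_col mul0mx mulmx0 addr0 mul0mx.
  - by rewrite ioS pr0 -mulmxA mul_row_col mul0mx mulmx0 addr0 mulmx0.
move=> i; rewrite big_ord_recl pr0 io0.
under eq_bigr => m _ do rewrite prS ioS mulmxA -(mulmxA _ (pr' m i)).
rewrite -mulmx_suml -mulmx_sumr e3 mulmx1 !mul_col_row !mulmx0 !mul0mx mulmx1.
  by rewrite add_block_mx !addr0 !add0r mulmx1 -scalar_mx_block.
Qed.

End Sums.


Section PT.
Variable K : fieldType.
Variables (dI : Order.disp_t) (I : finPOrderType dI)
          (dJ : Order.disp_t) (J : finPOrderType dJ).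
Variable P : pfun K I J.
Hypothesis thinP : thin P.
Local Notation vf := (vfun K I).
Local Notation PO := (pobj P).

Lemma thin0 a b (al : ntr (PO b) (PO a)) : is_nat al -> ~~ (a <= b)%O ->
  forall i, al i = 0.
Proof. by move=> nal nab; have := thinP nal; rewrite (negbTE nab). Qed.

Lemma thinc a b (al : ntr (PO b) (PO a)) : is_nat al -> (a <= b)%O ->
  exists c, forall i, al i = c *: pmor P a b i.
Proof. by move=> nal nab; have := thinP nal; rewrite nab. Qed.

Definition cov (X : vf) n := exists (C : vf) (t : 'I_n -> J)
  (io : forall k, ntr (PO (t k)) C) (pr : forall k, ntr C (PO (t k))) (p : ntr C X),
  (forall k, inP P (t k)) /\ isSum io pr /\ is_nat p /\ Pepi P p.

Lemma sum_proj (C : vf) n (t : 'I_n -> J)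
  (io : forall k, ntr (PO (t k)) C) (pr : forall k, ntr C (PO (t k))) :
  (forall k, inP P (t k)) -> isSum io pr -> Pprojective P C.
Proof.
move=> inPt [nio [npr [e1 [e2 e3]]]] X Y f nf ef al nal.
have h k : exists be : ntr (PO (t k)) X, is_nat be /\
    forall i, ncomp be f i = io k i *m al i.
  by apply: ef => //; apply: is_nat_comp.
have [be hbe] := fin_all_exists h.
exists (fun i => \sum_k pr k i *m be k i); split.
  by apply: is_nat_sum => k _; apply: is_nat_comp => //; case: (hbe k).
move=> i; rewrite /ncomp mulmx_suml.
under eq_bigr => k _ do rewrite -mulmxA [_ *m f i](proj2 (hbe k) i) mulmxA.
by rewrite -mulmx_suml e3 mul1mx.
Qed.


Lemma key (X C : vf) n (t : 'I_n -> J)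
  (io : forall k, ntr (PO (t k)) C) (pr : forall k, ntr C (PO (t k))) (p : ntr C X) :
  (forall k, inP P (t k)) -> isSum io pr -> is_nat p -> Pepi P p ->
  (forall n', cov X n' -> (n <= n')%N) ->
  forall (f : ntr C C) (phi : ntr X X), is_nat f -> is_nat phi ->
  (forall i, phi i \in unitmx) -> (forall i, f i *m p i = p i *m phi i) ->
  forall i, f i \in unitmx.
Proof.
move=> inPt hsum np ep hmin f phi nf nphi uphi fp i0.
have [nio [npr [e1 [e2 e3]]]] := hsum.
case: (boolP (f i0 \in unitmx)) => // nu; exfalso.
have /det0P [v nzv vf0] : \det (f i0) == 0.
  by move: nu; rewrite unitmxE unitfE negbK.
pose u m := v *m pr m i0.
have vE : v = \sum_m u m *m io m i0.
  by apply: esym; rewrite /u; under eq_bigr => m _ do rewrite -mulmxA; rewrite -mulmx_sumr e3 mulmx1.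
have [k1 Sk1] : exists k, u k != 0.
  apply/existsP; apply: contraNT nzv; rewrite negb_exists => /forallP h0.
  by rewrite vE big1 // => m _; move/negPn: (h0 m) => /eqP ->; rewrite mul0mx.
pose mu m := #|[set b : J | (t m <= b)%O]|.
case: (@arg_minnP _ k1 (fun m => u m != 0) mu Sk1) => k Sk kmin.
have kmax m : u m != 0 -> ~~ (t k < t m)%O.
  move=> Sm; apply/negP => ltkm; have := kmin m Sm; apply/negP; rewrite -ltnNge.
  apply: proper_card; apply/properP; split.
    by apply/subsetP => b; rewrite !inE => h; exact: le_trans (ltW ltkm) h.
  by exists (t k); rewrite !inE ?lexx // lt_geF.
have [c hc] : exists c, u k 0 c != 0.
  apply/existsP; apply: contraNT Sk; rewrite negb_exists => /forallP h0.
  by apply/eqP/rowP => c; move/negPn: (h0 c) => /eqP ->; rewrite mxE.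
have hcf m l : exists cc : K, (t l <= t m)%O ->
    forall i, io m i *m f i *m pr l i = cc *: pmor P (t l) (t m) i.
  case: (boolP (t l <= t m)%O) => h; last by exists 0.
  have [cc hcc] := @thinc (t l) (t m) (fun i => io m i *m f i *m pr l i)
     (is_nat_comp (is_nat_comp (nio m) nf) (npr l)) h.
  by exists cc.
have [cf hcf'] := fin_all_exists (fun m => fin_all_exists (hcf m)).
pose w m := if t m == t k then (u m *m pmor P (t k) (t m) i0) 0 c else 0.
have wk : w k = u k 0 c by rewrite /w eqxx pmor_id mulmx1.
have wk0 : w k != 0 by rewrite wk.
have hw l : t l = t k -> \sum_m w m * cf m l = 0.
  move=> tla.
  have H0 : (v *m f i0 *m pr l i0 *m pmor P (t k) (t l) i0) 0 c = 0.
    by rewrite vf0 !mul0mx mxE.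
  rewrite {1}vE !mulmx_suml summxE in H0.
  apply: (etrans _ H0); apply: eq_bigr => m _.
  have -> : u m *m io m i0 *m f i0 *m pr l i0 = u m *m (io m i0 *m f i0 *m pr l i0).
    by rewrite !mulmxA.
  have hkl : (t k <= t l)%O by rewrite tla.
  case: (boolP (t l <= t m)%O) => hlm.
    rewrite hcf' // -scalemxAr -scalemxAl mxE -mulmxA -(pmor_comp P hkl hlm).
    case: (eqVneq (t m) (t k)) => tma.
      by rewrite /w (introT eqP tma) mulrC.
    have ltakm : (t k < t m)%O by rewrite lt_neqAle eq_sym tma -tla hlm.
    move/negPn: (contraL (kmax m) ltakm) => /eqP um0.
    by rewrite /w (negbTE tma) um0 mul0mx mxE mulr0 mul0r.
  have tma : t m != t k by apply: contraNneq hlm => ->; rewrite tla.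
  have := thin0 (is_nat_comp (is_nat_comp (nio m) nf) (npr l)) hlm i0.
  rewrite /ncomp => ->.
  by rewrite /w (negbTE tma) mul0r mulmx0 mul0mx mxE.
pose y : ntr (PO (t k)) C := fun i =>
  \sum_(m | t m == t k) w m *: (pmor P (t m) (t k) i *m io m i).
have ny : is_nat y.
  apply: is_nat_sum => m /eqP tm; apply: is_nat_scale; apply: is_nat_comp.
    by apply: pmor_nat; rewrite tm.
  exact: nio.
have ypk i : y i *m pr k i = w k *: 1%:M.
  rewrite /y mulmx_suml (bigD1 k) //= big1 => [|m /andP [_ hmk]].
    by rewrite addr0 -scalemxAl -mulmxA e1 mulmx1 pmor_id.
  by rewrite -scalemxAl -mulmxA e2 ?mulmx0 ?scaler0 // eq_sym.
have yfz l : (t l == t k) || ~~ (t l <= t k)%O -> forall i, y i *m f i *m pr l i = 0.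
  case/orP => [/eqP tla | ntl] i.
    rewrite /y !mulmx_suml.
    transitivity (\sum_(m | t m == t k) (w m * cf m l) *: pmor P (t l) (t k) i).
      apply: eq_bigr => m /eqP tm.
      have E : w m *: (pmor P (t m) (t k) i *m io m i) *m f i *m pr l i
          = w m *: (pmor P (t m) (t k) i *m (io m i *m f i *m pr l i)).
        by rewrite -!scalemxAl !mulmxA.
      have hlm : (t l <= t m)%O by rewrite tla tm.
      have hmk : (t m <= t k)%O by rewrite tm.
      by rewrite E hcf' // -scalemxAr scalerA (pmor_comp P hlm hmk).
    rewrite -scaler_suml.
    have -> : \sum_(m | t m == t k) w m * cf m l = \sum_m w m * cf m l.
      rewrite big_mkcond; apply: eq_bigr => m _; rewrite /w.
      by case: (t m == t k) => //; rewrite mul0r.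
    by rewrite hw // scale0r.
  have := thin0 (is_nat_comp (is_nat_comp ny nf) (npr l)) ntl i.
  by rewrite /ncomp.
have hb l : exists be : ntr (PO (t l)) C, is_nat be /\
    forall i, be i *m p i = io l i *m p i *m invmx (phi i).
  have := @ep (t l) (inPt l) (fun i => io l i *m p i *m invmx (phi i))
    (is_nat_comp (is_nat_comp (nio l) np) (is_nat_inv nphi uphi)).
  by case=> be [nbe hbe]; exists be; split.
have [be hbe] := fin_all_exists hb.
pose Y : ntr (PO (t k)) C := fun i => \sum_l y i *m f i *m pr l i *m be l i.
have nY : is_nat Y.
  apply: is_nat_sum => l _; apply: is_nat_comp; last exact: (proj1 (hbe l)).
  by apply: is_nat_comp => //; apply: is_nat_comp.
have hYp i : Y i *m p i = y i *m p i.
  have E l : y i *m f i *m pr l i *m be l i *m p i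
      = (y i *m f i) *m (pr l i *m io l i) *m (p i *m invmx (phi i)).
    by rewrite -mulmxA (proj2 (hbe l) i) !mulmxA.
  rewrite /Y mulmx_suml (eq_bigr _ (fun l _ => E l)) -mulmx_suml -mulmx_sumr e3.
  by rewrite mulmx1 !mulmxA -(mulmxA (y i)) fp mulmxA mulmxK.
have hYk i : Y i *m pr k i = 0.
  rewrite /Y mulmx_suml big1 // => l _; rewrite -mulmxA.
  case: (boolP ((t l == t k) || ~~ (t l <= t k)%O)) => h.
    by rewrite yfz // mul0mx.
  have ntk : ~~ (t k <= t l)%O.
    move: h; rewrite negb_or negbK => /andP [hne hle].
    by apply: contra hne => hkl; rewrite eq_le hle hkl.
  have := thin0 (is_nat_comp (proj1 (hbe l)) (npr k)) ntk i.
  by rewrite /ncomp => ->; rewrite mulmx0.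
pose z : ntr (PO (t k)) C := fun i => io k i - (w k)^-1 *: (y i - Y i).
have nz : is_nat z.
  by apply: is_nat_sub => //; apply: is_nat_scale; apply: is_nat_sub.
have hzp i : z i *m p i = io k i *m p i.
  by rewrite /z mulmxBl -scalemxAl mulmxBl hYp subrr scaler0 subr0.
have hzk i : z i *m pr k i = 0.
  by rewrite /z mulmxBl -scalemxAl mulmxBl ypk hYk subr0 scalerA mulVf // scale1r e1 subrr.
pose e : ntr C C := fun i => 1%:M - pr k i *m io k i + pr k i *m z i.
have ne : is_nat e.
  apply: is_nat_add; last exact: is_nat_comp.
  by apply: is_nat_sub; [exact: is_nat_id' | exact: is_nat_comp].
have hep i : e i *m p i = p i.
  by rewrite /e !mulmxDl mulNmx mul1mx -!mulmxA hzp subrK.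
have hek i : e i *m pr k i = 0.
  by rewrite /e !mulmxDl mulNmx mul1mx -!mulmxA e1 hzk mulmx1 mulmx0 subrr addr0.
pose t' (m : 'I_n.-1) := t (lift k m).
have [C' [io' [pr' hs']]] := sum_exists (fun m => PO (t' m)).
have [nio' [npr' [e1' [e2' e3']]]] := hs'.
pose jj : ntr C' C := fun i => \sum_m pr' m i *m io (lift k m) i.
pose qq : ntr C C' := fun i => \sum_m pr (lift k m) i *m io' m i.
have njj : is_nat jj.
  move=> i j lij; rewrite mulmx_sumr mulmx_suml; apply: eq_bigr => m _.
  exact: (is_nat_comp (npr' m) (nio (lift k m))).
have nqq : is_nat qq.
  move=> i j lij; rewrite mulmx_sumr mulmx_suml; apply: eq_bigr => m _.
  exact: (is_nat_comp (npr (lift k m)) (nio' m)).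
have hqj i : qq i *m jj i = 1%:M - pr k i *m io k i.
  rewrite /qq /jj mulmx_suml.
  transitivity (\sum_m pr (lift k m) i *m io (lift k m) i).
    apply: eq_bigr => m _; rewrite mulmx_sumr (bigD1 m) //= big1 => [|m' hm'].
      by rewrite addr0 mulmxA -(mulmxA (pr (lift k m) i)) e1' mulmx1.
    by rewrite mulmxA -(mulmxA (pr _ i)) e2' ?mulmx0 ?mul0mx.
  by rewrite -(e3 i) (bigD1_ord k) //= addrC addrK.
pose p' : ntr C' X := fun i => jj i *m p i.
have hcov : cov X n.-1.
  exists C', t', io', pr', p'; split=> //; first by move=> m; apply: inPt.
  split=> //; split; first exact: is_nat_comp.
  move=> b inb al nal; have [bt [nbt hbt]] := ep b inb al nal.
  exists (fun i => bt i *m e i *m qq i); split.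
    by apply: is_nat_comp => //; apply: is_nat_comp.
  move=> i; rewrite /ncomp /p' mulmxA -(mulmxA _ (qq i)) hqj mulmxBr mulmx1.
  rewrite mulmxBl -!mulmxA hep (mulmxA (e i)) hek mul0mx mulmx0 subr0.
  exact: hbt.
have := hmin _ hcov; rewrite leqNgt ltn_predL.
by rewrite (leq_ltn_trans (leq0n k) (ltn_ord k)).
Qed.

End PT.


Lemma ex_min_nat (Q : nat -> Prop) : (exists n, Q n) ->
  exists n, Q n /\ forall m, Q m -> (n <= m)%N.
Proof.
case=> n; elim: n {-2}n (leqnn n) => [|N IH] n hn Qn.
  by exists n; split=> // m _; move: hn; rewrite leqn0 => /eqP ->.
case: (classic (exists m, (m < n)%N /\ Q m)) => [[m [lmn Qm]]|h].
  by apply: (IH m) => //; rewrite -ltnS (leq_trans lmn hn).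
exists n; split=> // m Qm; rewrite leqNgt; apply/negP => lmn.
by apply: h; exists m.
Qed.

Lemma ex_max_nat (Q : nat -> Prop) D : (exists n, Q n) -> (forall n, Q n -> (n <= D)%N) ->
  exists n, Q n /\ forall m, Q m -> (m <= n)%N.
Proof.
move=> [n Qn] hD.
have : exists k, Q (D - k)%N.
  by exists (D - n)%N; rewrite subKn ?hD.
move/ex_min_nat => [k [Qk kmin]].
exists (D - k)%N; split=> // m Qm.
have hm := hD _ Qm.
have := kmin (D - m)%N; rewrite subKn // => /(_ Qm) hk.
by lia.
Qed.

Section Span.
Variable K : fieldType.
Variables (dI : Order.disp_t) (I : finPOrderType dI).
Local Notation vf := (vfun K I).

Definition pad r s N (A : 'M[K]_(r, s)) : 'M[K]_N :=
  \matrix_(x < N, y < N)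
    match (insub (val x) : option 'I_r), (insub (val y) : option 'I_s) with
    | Some x', Some y' => A x' y'
    | _, _ => 0 end.

Lemma pad_inj r s N (A B : 'M[K]_(r, s)) : (r <= N)%N -> (s <= N)%N ->
  pad N A = pad N B -> A = B.
Proof.
move=> hr hs h; apply/matrixP => x y.
have := congr1 (fun M : 'M_N => M (widen_ord hr x) (widen_ord hs y)) h.
by rewrite !mxE /= !valK.
Qed.

Lemma pad_sum r s N n (c : 'I_n -> K) (A : 'I_n -> 'M[K]_(r, s)) :
  pad N (\sum_j c j *: A j) = \sum_j c j *: pad N (A j).
Proof.
apply/matrixP => x y; rewrite !mxE summxE.
case Ex: (insub (val x) : option 'I_r) => [x'|];
  case Ey: (insub (val y) : option 'I_s) => [y'|].
- by rewrite summxE; apply: eq_bigr => j _; rewrite !mxE Ex Ey.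
- by rewrite big1 // => j _; rewrite !mxE Ex Ey mulr0.
- by rewrite big1 // => j _; rewrite !mxE Ex mulr0.
- by rewrite big1 // => j _; rewrite !mxE Ex mulr0.
Qed.

Lemma span_nat (F G : vf) : exists m (xs : 'I_m -> ntr F G),
  (forall j, is_nat (xs j)) /\
  forall al, is_nat al -> exists cc : 'I_m -> K, forall i, al i = \sum_j cc j *: xs j i.
Proof.
pose N := (\max_(i : I) (vdim F i + vdim G i))%N.
have hF i : (vdim F i <= N)%N.
  by apply: leq_trans (leq_addr _ _) (leq_bigmax i).
have hG i : (vdim G i <= N)%N.
  by apply: leq_trans (leq_addl _ _) (leq_bigmax i).
pose V := {ffun I -> 'M[K]_N}.
pose enc (al : ntr F G) : V := [ffun i => pad N (al i)].
have enc_inj al be : enc al = enc be -> forall i, al i = be i.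
  move=> h i; apply: (pad_inj (hF i) (hG i)).
  by have := congr1 (fun f : V => f i) h; rewrite !ffunE.
have enc_sum n (c : 'I_n -> K) (A : 'I_n -> ntr F G) :
    enc (fun i => \sum_j c j *: A j i) = \sum_j c j *: enc (A j).
  by apply/ffunP => i; rewrite ffunE sum_ffunE pad_sum; apply: eq_bigr => j _; rewrite !ffunE.
pose Q m := exists X : seq V, size X = m /\ free X /\
   forall x, x \in X -> exists al, is_nat al /\ enc al = x.
have [m [[X [sX [fX hX]]] mmax]] : exists m, Q m /\ forall m', Q m' -> (m' <= m)%N.
  apply: (@ex_max_nat Q (\dim (fullv : {vspace V}))).
    by exists 0%N, [::]; split=> //; split; [rewrite /free span_nil dimv0 | by []].
  move=> n' [X' [<- [fX' _]]]; rewrite -(eqP fX'); exact: dimvS (subvf _).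
have spanX al : is_nat al -> enc al \in <<X>>%VS.
  move=> nal; apply: contraT => hn.
  have : Q (size X).+1.
    exists (enc al :: X); split=> //; split; first by rewrite free_cons hn fX.
    move=> x; rewrite inE => /orP [/eqP -> | /hX //]; by exists al.
  by move/mmax; rewrite sX ltnn.
have hx (j : 'I_(size X)) : exists al, is_nat al /\ enc al = X`_j.
  by apply: hX; apply: mem_nth.
have [xs hxs] := fin_all_exists hx.
exists (size X), xs; split; first by move=> j; case: (hxs j).
move=> al nal; pose cc := fun j => coord (in_tuple X) j (enc al); exists cc.
apply: (enc_inj al (fun i => \sum_j cc j *: xs j i)).
have sp : enc al \in <<in_tuple X>>%VS by exact: spanX.
rewrite enc_sum {1}(coord_span sp).
by apply: eq_bigr => j _; case: (hxs j) => _ ->.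
Qed.

End Span.


Section PT2.
Variable K : fieldType.
Variables (dI : Order.disp_t) (I : finPOrderType dI)
          (dJ : Order.disp_t) (J : finPOrderType dJ).
Variable P : pfun K I J.
Hypothesis thinP : thin P.
Local Notation vf := (vfun K I).
Local Notation PO := (pobj P).

Lemma cover_exists (X : vf) : exists n, cov P X n.
Proof.
have h b : exists u : {m : nat & 'I_m -> ntr (PO b) X},
    (forall j, is_nat (projT2 u j)) /\ forall al, is_nat al ->
    exists cc : 'I_(projT1 u) -> K, forall i, al i = \sum_j cc j *: projT2 u j i.
  have [m [xs [h1 h2]]] := span_nat (PO b) X.
  by exists (existT _ m xs).
have [gg hgg] := fin_all_exists h.
pose inPb b := [exists i, vdim (PO b) i != 0%N].
have inPbE b : inPb b -> inP P b.
  by move/existsP => [i hi]; exists i; apply/eqP.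
have inPbE' b : inP P b -> inPb b.
  by move=> [i hi]; apply/existsP; exists i; apply/eqP.
pose ms b := projT1 (gg b).
pose ms' b := if inPb b then ms b else 0%N.
have hms b : (ms' b <= ms b)%N by rewrite /ms'; case: ifP.
pose T := {b : J & 'I_(ms' b)}.
pose gen (e : T) : ntr (PO (tag e)) X := projT2 (gg (tag e)) (widen_ord (hms _) (tagged e)).
pose n := #|{: {b : J & 'I_(ms' b)} }|.
pose t (k : 'I_n) := tag (enum_val k).
have [C [io [pr hs]]] := sum_exists (fun k : 'I_n => PO (t k)).
have [nio [npr [e1 [e2 e3]]]] := hs.
pose p : ntr C X := fun i => \sum_k pr k i *m gen (enum_val k) i.
have ngen (e : T) : is_nat (gen e) by rewrite /gen; case: (hgg (tag e)).
exists n, C, t, io, pr, p; split.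
  move=> k; apply: inPbE; rewrite /t; case: (enum_val k) => b j /=.
  by move: j; rewrite /ms'; case: (inPb b) => // -[].
split=> //; split.
  move=> i j lij; rewrite mulmx_sumr mulmx_suml; apply: eq_bigr => k _.
  exact: (is_nat_comp (npr k) (ngen (enum_val k))).
move=> b inb al nal.
have [cc hcc] := (proj2 (hgg b)) al nal.
have ib : inPb b := inPbE' b inb.
have hjlt (j : 'I_(ms b)) : (val j < ms' b)%N by rewrite /ms' ib ltn_ord.
pose kk (j : 'I_(ms b)) : 'I_n :=
  enum_rank (Tagged (fun b => 'I_(ms' b)) (Ordinal (hjlt j))).
have tk j : t (kk j) = b by rewrite /t /kk enum_rankK.
have gk j i : pmor P (t (kk j)) b i *m gen (enum_val (kk j)) i = projT2 (gg b) j i.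
  have E : enum_val (kk j) = Tagged (fun b => 'I_(ms' b)) (Ordinal (hjlt j)).
    by rewrite enum_rankK.
  rewrite /t; move: (enum_val (kk j)) E => e ->.
  rewrite pmor_id mul1mx /gen /=; congr (projT2 (gg b) _ i); exact: val_inj.
exists (fun i => \sum_j cc j *: (pmor P (t (kk j)) b i *m io (kk j) i)); split.
  move=> i j' lij; rewrite mulmx_sumr mulmx_suml; apply: eq_bigr => j _.
  have hle : (t (kk j) <= b)%O by rewrite tk.
  exact: (is_nat_scale (cc j) (is_nat_comp (pmor_nat P hle) (nio (kk j)))).
move=> i; rewrite /ncomp (hcc i) mulmx_suml; apply: eq_bigr => j _.
rewrite -scalemxAl -mulmxA /p mulmx_sumr (bigD1 (kk j)) //= big1 => [|l hl].
  by rewrite addr0 (mulmxA (io (kk j) i)) e1 mul1mx gk.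
by rewrite mulmxA e2 ?mul0mx.
Qed.

Definition good (X C : vf) (p : ntr C X) : Prop :=
  Pfree P C /\ is_nat p /\ Pepi P p /\
  (forall (f : ntr C C) (phi : ntr X X), is_nat f -> is_nat phi ->
    (forall i, phi i \in unitmx) -> (forall i, f i *m p i = p i *m phi i) ->
    forall i, f i \in unitmx).

Lemma good_exists (X : vf) : exists (C : vf) (p : ntr C X), good p.
Proof.
have [n [[C [t [io [pr [p [inPt [hs [np ep]]]]]]]] nmin]] := ex_min_nat (cover_exists X).
exists C, p; split; first by exists n, t; split=> //; exists io, pr.
do 2!split=> //.
exact: (key thinP inPt hs np ep nmin).
Qed.

Lemma free_proj (C : vf) : Pfree P C -> Pprojective P C.
Proof.
move=> [n [t [inPt [io [pr hs]]]]]; exact: (sum_proj inPt hs).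
Qed.

Definition gC (X : vf) : vf := proj1_sig (constructive_indefinite_description _ (good_exists X)).
Lemma gp_ex (X : vf) : exists p : ntr (gC X) X, good p.
Proof. exact: (proj2_sig (constructive_indefinite_description _ (good_exists X))). Qed.
Definition gp (X : vf) : ntr (gC X) X := proj1_sig (constructive_indefinite_description _ (gp_ex X)).
Lemma gp_good (X : vf) : good (gp X).
Proof. exact: (proj2_sig (constructive_indefinite_description _ (gp_ex X))). Qed.
Lemma gp_nat (X : vf) : is_nat (gp X).
Proof. by case: (gp_good X) => _ []. Qed.

Lemma exact_gen (X Z : vf) (h : ntr (gC X) Z) :
  (forall i, kinc (gp_nat X) i *m h i = 0) ->
  (forall i m (v : 'M_(m, vdim (gC X) i)), v *m h i = 0 -> v *m gp X i = 0) ->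
  Pexact P (fun i => gp (kerf (gp_nat X)) i *m kinc (gp_nat X) i) h.
Proof.
move=> H1 H2 a inPa; split.
  move=> be nbe i; change (be i *m (gp (kerf (gp_nat X)) i *m kinc (gp_nat X) i) *m h i = 0).
  by rewrite -(mulmxA (be i)) -(mulmxA (gp _ i)) H1 !mulmx0.
move=> al nal hal.
have [be [nbe hbe]] := kinc_fact (gp_nat X) nal (fun i => H2 _ _ _ (hal i)).
have [_ [_ [ep _]]] := gp_good (kerf (gp_nat X)).
have [ga [nga hga]] := ep a inPa be nbe.
exists ga; split=> // i; rewrite /ncomp mulmxA.
by have := hga i; rewrite /ncomp => ->.
Qed.

Fixpoint Xs (M : vf) (d : nat) : vf :=
  match d with 0 => M | d'.+1 => kerf (gp_nat (Xs M d')) end.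

Definition resol (M : vf) : presol M :=
  @PResol _ _ _ M (fun d => gC (Xs M d))
    (fun d i => gp (Xs M d.+1) i *m kinc (gp_nat (Xs M d)) i) (gp M).

Lemma resol_ok (M : vf) : is_min_Presolution P (resol M).
Proof.
split.
  split.
    move=> d; apply: is_nat_comp; [exact: gp_nat | exact: kinc_nat].
  split; first exact: gp_nat.
  split; first by move=> d; apply: free_proj; case: (gp_good (Xs M d)).
  split.
    move=> a inPa; split; first by move=> be _ i; rewrite /ncomp /nzero mulmx0.
    move=> al nal _; have [_ [_ [ep _]]] := gp_good M; exact: ep.
  split.
    apply: exact_gen => [i|i m v ->] //; exact: kinc_p.
  move=> d; apply: exact_gen => [i|i m v hv].
    by rewrite mulmxA kinc_p mul0mx.
  move: hv; rewrite mulmxA -(mul0mx _ (kinc (gp_nat (Xs M d)) i)).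
  exact: kinc_inj.
move=> f [nf [fc f0]].
suff H : forall d, exists phi : ntr (Xs M d) (Xs M d), is_nat phi /\
    (forall i, phi i \in unitmx) /\ forall i, f d i *m gp (Xs M d) i = gp (Xs M d) i *m phi i.
  move=> d; apply: unit_iso => //.
  have [phi [nphi [uphi hphi]]] := H d.
  have [_ [_ [_ hk]]] := gp_good (Xs M d).
  exact: (hk (f d) phi (nf d) nphi uphi hphi).
elim=> [|d [phi [nphi [uphi hphi]]]].
  exists (nid M); split; first exact: is_nat_id.
  split; first by move=> i; rewrite /nid unitmx1.
  by move=> i; rewrite /nid mulmx1; have := f0 i; rewrite /ncomp.
have [_ [_ [_ hk]]] := gp_good (Xs M d).
have uf := hk _ _ (nf d) nphi uphi hphi.
pose k := kinc (gp_nat (Xs M d)).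
pose p := gp (Xs M d).
have hfinv i : invmx (f d i) *m p i = p i *m invmx (phi i).
  rewrite -[invmx (f d i) *m p i](mulmxK (uphi i)) -(mulmxA (invmx _)).
  by rewrite -hphi mulmxA mulVmx // mul1mx.
have [be [nbe hbe]] := kinc_fact (gp_nat (Xs M d)) (al := fun i => k i *m f d i)
  (is_nat_comp (kinc_nat _) (nf d))
  (fun i => etrans (etrans (esym (mulmxA _ _ _)) (congr1 (mulmx (k i)) (hphi i)))
              (etrans (mulmxA _ _ _) (etrans (congr1 (mulmx^~ (phi i)) (kinc_p _ i)) (mul0mx _ _)))).
have [be' [nbe' hbe']] := kinc_fact (gp_nat (Xs M d)) (al := fun i => k i *m invmx (f d i))
  (is_nat_comp (kinc_nat _) (is_nat_inv (nf d) uf))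
  (fun i => etrans (etrans (esym (mulmxA _ _ _)) (congr1 (mulmx (k i)) (hfinv i)))
              (etrans (mulmxA _ _ _) (etrans (congr1 (mulmx^~ (invmx (phi i))) (kinc_p _ i)) (mul0mx _ _)))).
exists be; split=> //; split.
  move=> i; have : be i *m be' i = 1%:M.
    apply: (@kinc_inj _ _ _ _ _ _ (gp_nat (Xs M d))).
    rewrite -mulmxA hbe' mulmxA hbe -mulmxA mulmxV // mulmx1 mul1mx //.
  by case/mulmx1_unit.
move=> i; apply: (@kinc_inj _ _ _ _ _ _ (gp_nat (Xs M d))).
have E := fc d i; rewrite /ncomp in E.
rewrite -(mulmxA (f d.+1 i)) E -(mulmxA (gp _ i) (be i)) hbe.
by rewrite mulmxA.
Qed.

Lemma acyc : acyclic P.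
Proof.
move=> C pC.
have [[n [t [inPt [io [pr [nio [npr [e1 [e2 e3]]]]]]]]] [np [ep hk]]] := gp_good C.
pose p := gp C.
have [s [ns hs]] := pC _ _ p np ep (nid C) (is_nat_id C).
have hs' i : s i *m p i = 1%:M by have := hs i; rewrite /ncomp /nid.
have ups i : (p i *m s i) \in unitmx.
  apply: (hk (fun i => p i *m s i) (nid C) (is_nat_comp np ns) (is_nat_id C)).
    by move=> j; rewrite /nid unitmx1.
  by move=> j; rewrite /nid mulmx1 -mulmxA hs' mulmx1.
pose s' i := s i *m invmx (p i *m s i).
have ns' : is_nat s' by apply: is_nat_comp => //; apply: is_nat_inv => //; apply: is_nat_comp.
have hps' i : p i *m s' i = 1%:M by rewrite /s' mulmxA mulmxV.
have hs'p i : s' i *m p i = 1%:M.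
  have E : invmx (p i *m s i) *m p i = p i.
    rewrite -[RHS]mul1mx -(mulVmx (ups i)) -mulmxA -(mulmxA (p i)) hs' mulmx1.
    done.
  by rewrite /s' -mulmxA E hs'.
exists n, t; split=> //.
exists (fun k i => io k i *m p i), (fun k i => s' i *m pr k i).
split; first by move=> k; apply: is_nat_comp.
split; first by move=> k; apply: is_nat_comp.
split; first by move=> k i; rewrite mulmxA -(mulmxA (io k i)) hps' mulmx1 e1.
split; first by move=> k l i hkl; rewrite mulmxA -(mulmxA (io l i)) hps' mulmx1 e2.
move=> i.
under eq_bigr => k _ do rewrite mulmxA -(mulmxA (s' i)).
by rewrite -mulmx_suml -mulmx_sumr e3 mulmx1 hs'p.
Qed.

End PT2.


Theorem corollary5p12 (K : fieldType)
  (dI : Order.disp_t) (I : finPOrderType dI)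
  (dJ : Order.disp_t) (J : finPOrderType dJ)
  (P : pfun K I J) :
  thin P ->
  (forall M : vfun K I, exists R : presol M, is_min_Presolution P R) /\
  acyclic P.
Proof.
move=> thinP; split; last exact: acyc.
by move=> M; exists (resol thinP M); apply: resol_ok.
Qed.
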